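(* Let $m\ge2$ and $G=CK(2m-1)$. If $B$ is a set of edges of $G$ having an edge in common with every simple Hamiltonian path of $G$, then $|B|\ge m$.
   Context: $CK(2m-1)$ is the complete convex geometric graph on $2m-1$ points in convex position in the plane, labelled cyclically $0,\dots,2m-2$ (elements of $\mathbb{Z}_{2m-1}$), with all segments between vertices as edges. A simple Hamiltonian path is a path through all vertices whose edges pairwise do not cross. *)

(* Defs.v *)
From mathcomp Require Import all_boot.
Set Implicit Arguments. Unset Strict Implicit. Unset Printing Implicit Defensive.

(* Vertices of CK(n): 'I_n, labelled 0..n-1 in cyclic (convex) order.
   An edge (segment) is a 2-element subset of the vertices. *)
Definition is_edge (n : nat) (e : {set 'I_n}) : bool := #|e| == 2.

(* Two segments cross (in their relative interiors) iff their four endpoints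
   are distinct and interleave in the cyclic order; with labels 0..n-1
   around the convex polygon this means a < c < b < d for some labelling. *)
Definition cross (n : nat) (e f : {set 'I_n}) : Prop :=
  exists a b c d : 'I_n,
    [/\ e = [set a; b], f = [set c; d] & (a < c < b)%N && (b < d)%N].

Definition ham_path (n : nat) (s : seq 'I_n) : bool := perm_eq s (enum 'I_n).

Definition path_edges (n : nat) (s : seq 'I_n) : seq {set 'I_n} :=
  [seq [set p.1; p.2] | p <- zip s (behead s)].

Definition simple_ham_path (n : nat) (s : seq 'I_n) : Prop :=
  ham_path s /\
  (forall e f, e \in path_edges s -> f \in path_edges s -> ~ cross e f).

(* Main.v *)
Require Import Defs.
From mathcomp Require Import all_boot zify.
Set Implicit Arguments. Unset Strict Implicit. Unset Printing Implicit Defensive.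

Definition red (N u : nat) := if u < N then u else u - N.
Definition zz (N v k : nat) :=
  if k %% 2 == 1 then red N (v + k %/ 2 + 1) else red N (v + N - k %/ 2).

Ltac noif t := lazymatch t with context[if _ then _ else _] => fail | _ => idtac end.
Ltac splitif := repeat match goal with
 | |- context[if ?a < ?b then _ else _] => noif a; noif b; case: (ltnP a b) => ?
 | |- context[if ?a == ?b then _ else _] => noif a; noif b; case: (eqVneq a b) => ?
 end.


Lemma zz_lt N m v k (hN : N = 2 * m - 1) : v < N -> k < N -> zz N v k < N.
Proof. rewrite /zz /red; splitif; move=> *; lia. Qed.

Lemma zz_inj N m v k k' (hN : N = 2 * m - 1) : v < N -> k < N -> k' < N -> zz N v k = zz N v k' -> k = k'.
Proof. rewrite /zz /red; splitif; move=> *; lia. Qed.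

Lemma zz_cls N m v k (hN : N = 2 * m - 1) : v < N -> k.+1 < N ->
  red N (zz N v k + zz N v k.+1) = red N (2 * v) \/
  red N (zz N v k + zz N v k.+1) = red N (2 * v + 1).
Proof. rewrite /zz /red; splitif; move=> *; lia. Qed.

Lemma nocross N m v a b c d (hN : N = 2 * m - 1) : v < N -> a < c -> c < b -> b < d -> d < N ->
  (red N (a + b) = red N (2 * v) \/ red N (a + b) = red N (2 * v + 1)) ->
  (red N (c + d) = red N (2 * v) \/ red N (c + d) = red N (2 * v + 1)) -> False.
Proof. rewrite /red; splitif; move=> *; lia. Qed.

Lemma h_inj0 N m v w (hN : N = 2 * m - 1) : v < N -> w < N -> red N (2 * v) = red N (2 * w) -> v = w.
Proof. rewrite /red; splitif; move=> *; lia. Qed.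
Lemma h_inj1 N m v w (hN : N = 2 * m - 1) : v < N -> w < N -> red N (2 * v + 1) = red N (2 * w + 1) -> v = w.
Proof. rewrite /red; splitif; move=> *; lia. Qed.
Lemma red_lt N m u (hN : N = 2 * m - 1) : u < 2 * N -> red N u < N.
Proof. rewrite /red; splitif; move=> *; lia. Qed.

Lemma path_edgesP n (s : seq 'I_n) e x0 : e \in path_edges s ->
  exists i, i.+1 < size s /\ e = [set nth x0 s i; nth x0 s i.+1].
Proof.
elim: s => [|x s IH] //=.
case: s IH => [|y s] IH //.
have -> : path_edges [:: x, y & s] = [set x; y] :: path_edges (y :: s) by [].
rewrite in_cons => /orP [/eqP -> | /IH [i [hi ->]]].
  by exists 0.
by exists i.+1.
Qed.

Lemma set2_sum n (a b x y : 'I_n) : [set a; b] = [set x; y] -> (a + b = x + y)%N.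
Proof.
move=> E.
have ha : a \in [set x; y] by rewrite -E set21.
have hb : b \in [set x; y] by rewrite -E set22.
have hx : x \in [set a; b] by rewrite E set21.
have hy : y \in [set a; b] by rewrite E set22.
move: ha hb hx hy; rewrite !in_set2.
by move=> /orP[]/eqP/(congr1 (@nat_of_ord _)) ? /orP[]/eqP/(congr1 (@nat_of_ord _)) ? /orP[]/eqP/(congr1 (@nat_of_ord _)) ? /orP[]/eqP/(congr1 (@nat_of_ord _)) ?; lia.
Qed.

Definition zs n v := [seq (inord (zz n.+1 v k) : 'I_n.+1) | k <- iota 0 n.+1].

Section Main.
Variables (n m : nat) (hN : n.+1 = 2 * m - 1) (hm : 2 <= m).

Lemma nth_zs v i : v < n.+1 -> i < n.+1 -> nat_of_ord (nth ord0 (zs n v) i) = zz n.+1 v i.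
Proof.
move=> hv hi.
by rewrite (nth_map 0) ?size_iota // nth_iota // add0n inordK // (zz_lt hN).
Qed.

Lemma zs_edge v e : v < n.+1 -> e \in path_edges (zs n v) ->
  exists i, [/\ i.+1 < n.+1, e = [set nth ord0 (zs n v) i; nth ord0 (zs n v) i.+1],
     nat_of_ord (nth ord0 (zs n v) i) = zz n.+1 v i & nat_of_ord (nth ord0 (zs n v) i.+1) = zz n.+1 v i.+1].
Proof.
move=> hv /(path_edgesP ord0) [i [hi ->]].
rewrite size_map size_iota in hi.
exists i; split => //; rewrite nth_zs //; exact: ltnW.
Qed.

Lemma zs_simple v : v < n.+1 -> simple_ham_path (zs n v).
Proof.
move=> hv; split.
  have U : uniq (zs n v).
    rewrite map_inj_in_uniq ?iota_uniq // => i j.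
    rewrite !mem_iota !add0n => /andP[_ hi] /andP[_ hj] /(congr1 (@nat_of_ord _)).
    rewrite !inordK ?(zz_lt hN) //.
    exact: (zz_inj hN).
  rewrite /ham_path; apply: uniq_perm => //; first exact: enum_uniq.
  have [] := @uniq_min_size _ (zs n v) (enum 'I_n.+1) U.
  - by move=> x; rewrite mem_enum.
  - by rewrite size_enum_ord size_map size_iota.
  by [].
move=> e f he hf [a [b [c [d [Ee Ef /andP[/andP[h1 h2] h3]]]]]].
have [i [hi Ei Ni Ni1]] := zs_edge hv he.
have [j [hj Fj Nj Nj1]] := zs_edge hv hf.
have Sab : (a + b = zz n.+1 v i + zz n.+1 v i.+1)%N.
  by rewrite -Ni -Ni1; apply: set2_sum; rewrite -Ee -Ei.
have Scd : (c + d = zz n.+1 v j + zz n.+1 v j.+1)%N.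
  by rewrite -Nj -Nj1; apply: set2_sum; rewrite -Ef -Fj.
apply: (nocross hN hv h1 h2 h3 (ltn_ord d)).
  by rewrite Sab; apply: (zz_cls hN).
by rewrite Scd; apply: (zz_cls hN).
Qed.

Definition cls (e : {set 'I_n.+1}) : nat := red n.+1 (\sum_(x in e) val x).

Lemma cls2 (x y : 'I_n.+1) : x != y -> cls [set x; y] = red n.+1 (x + y).
Proof. by move=> xy; rewrite /cls big_setU1 ?big_set1 // in_set1. Qed.

Lemma main (B : {set {set 'I_n.+1}}) :
  (forall s : seq 'I_n.+1, simple_ham_path s -> exists2 e, e \in B & e \in path_edges s) ->
  m <= #|B|.
Proof.
move=> H.
pose S := [set (inord (cls e) : 'I_n.+1) | e in B].
pose h0 := fun v : 'I_n.+1 => (inord (red n.+1 (2 * v)) : 'I_n.+1).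
pose h1 := fun v : 'I_n.+1 => (inord (red n.+1 (2 * v + 1)) : 'I_n.+1).
have r0 : forall v : 'I_n.+1, red n.+1 (2 * v) < n.+1.
  by move=> v; apply: (red_lt hN); have := ltn_ord v; lia.
have r1 : forall v : 'I_n.+1, red n.+1 (2 * v + 1) < n.+1.
  by move=> v; apply: (red_lt hN); have := ltn_ord v; lia.
have Hi0 : injective h0.
  move=> v w /(congr1 (@nat_of_ord _)); rewrite !inordK ?r0 //.
  by move/(h_inj0 hN (ltn_ord v) (ltn_ord w)) => /val_inj.
have Hi1 : injective h1.
  move=> v w /(congr1 (@nat_of_ord _)); rewrite !inordK ?r1 //.
  by move/(h_inj1 hN (ltn_ord v) (ltn_ord w)) => /val_inj.
have Cov : forall v, (h0 v \in S) || (h1 v \in S).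
  move=> v.
  have [e eB] := H _ (zs_simple (ltn_ord v)).
  move=> /(zs_edge (ltn_ord v)) [i [hi Ei Ni Ni1]].
  have ne : nth ord0 (zs n v) i != nth ord0 (zs n v) i.+1.
    apply/eqP => /(congr1 (@nat_of_ord _)); rewrite Ni Ni1 => /(zz_inj hN (ltn_ord v)).
    by move=> /(_ (ltnW hi) hi); lia.
  have Ce : cls e = red n.+1 (zz n.+1 v i + zz n.+1 v i.+1).
    by rewrite Ei cls2 // Ni Ni1.
  have [Z|Z] := zz_cls hN (ltn_ord v) hi.
    by apply/orP; left; apply/imsetP; exists e => //; rewrite /h0 Ce Z.
  by apply/orP; right; apply/imsetP; exists e => //; rewrite /h1 Ce Z.
have T : n.+1 <= #|h0 @^-1: S| + #|h1 @^-1: S|.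
  apply: (leq_trans _ (leq_subr #|(h0 @^-1: S) :&: (h1 @^-1: S)| _)).
  rewrite -cardsU -{1}(card_ord n.+1) -cardsT.
  apply: subset_leq_card; apply/subsetP => v _.
  by rewrite in_setU !inE.
rewrite !card_preimset // in T.
have L : #|S| <= #|B| := leq_imset_card _ _.
lia.
Qed.
End Main.

Theorem proposition1 (m : nat) (hm : (2 <= m)%N)
  (B : {set {set 'I_(2 * m - 1)}}) :
  (forall e, e \in B -> is_edge e) ->
  (forall s : seq 'I_(2 * m - 1), simple_ham_path s ->
     exists2 e, e \in B & e \in path_edges s) ->
  (m <= #|B|)%N.
Proof.
move=> _; move: B.
have : 0 < 2 * m - 1 by lia.
case E : (2 * m - 1) => [|n] // _ B H.
exact: (main (esym E) hm H).
Qed.
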